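(* Let $1 \le k \le 3$ and let $\sigma_k=[v_0,\dots,v_k]$ be a $k$-simplex in Euclidean 3-space whose vertices $v_0,\dots,v_k$ are represented as normalized PGA points in $\mathbb{R}_{3,0,1}$. Then \[ \frac{1}{k!}\,\lVert v_0\vee\cdots\vee v_k\rVert \;=\; \frac{1}{k!}\Big\lVert \sum_{\sigma_{k-1}\in\partial\sigma_k} S(\sigma_{k-1})\Big\rVert_\infty \;=\; \frac{1}{k!}\Big\lVert \sum_{i=0}^{k}(-1)^i\, v_0\vee\cdots\vee \widehat{v_i}\vee\cdots\vee v_k\Big\rVert_\infty , \] where $\widehat{v_i}$ means that $v_i$ is omitted from the join. That is, the $k$-magnitude of $\sigma_k$ (length, area, volume) can be computed from the carriers of the $(k-1)$-dimensional facets of its oriented boundary.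
   Context: $\mathbb{R}_{3,0,1}$ (3D plane-based geometric algebra, PGA) is the Clifford algebra generated by an orthogonal basis $\mathbf e_0,\mathbf e_1,\mathbf e_2,\mathbf e_3$ with $\mathbf e_1^2=\mathbf e_2^2=\mathbf e_3^2=1$ and $\mathbf e_0^2=0$; $\mathbf e_{ij\cdots}$ denotes the geometric product of distinct basis vectors, $\wedge$ is the outer (wedge) product, and $I_3=\mathbf e_{123}$. The Hodge dual $A\mapsto A^*$ is the linear map determined on basis blades $\mathbf e_J$ by $\mathbf e_J\,\mathbf e_J^*=\mathbf e_{0123}$ (with $\mathbf e_J^*$ a multiple of the complementary basis blade); the join is defined by $(A\vee B)^*=A^*\wedge B^*$. Every multivector splits uniquely as $A=A_E+\mathbf e_0A_I$ with $A_E,A_I$ in the subalgebra generated by $\mathbf e_1,\mathbf e_2,\mathbf e_3$. The (Euclidean) norm is $\lVert A\rVert=\lVert A_E\rVert$ and the ideal norm is $\lVert A\rVert_\infty=\lVert A_I\rVert$, where for an element $B$ of the Euclidean subalgebra $\lVert B\rVert$ is the square root of the sum of squares of its coefficients on the basis blades (equivalently $\sqrt{\tilde B B}$ for blades, $\tilde{\ }$ denoting reversion). A normalized point at position $\vec v=x\mathbf e_1+y\mathbf e_2+z\mathbf e_3$ is $v=(\mathbf e_0+\vec v)^*=\mathbf e_{123}-\mathbf e_0\vec v\,\mathbf e_{123}$. For a simplex $\sigma=[v_0,\dots,v_m]$ its carrier is $S(\sigma)=v_0\vee\cdots\vee v_m$. The oriented boundary is $\partial[v_0,\dots,v_k]=\sum_{i=0}^k(-1)^i[v_0,\dots,\widehat{v_i},\dots,v_k]$,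 and the sum over $\partial\sigma_k$ of $S$ is taken with these signs. *)

(* Defs.v *)
From HB Require Import structures.
From mathcomp Require Import all_boot all_order all_algebra.
Set Implicit Arguments. Unset Strict Implicit. Unset Printing Implicit Defensive.
Import Order.TTheory GRing.Theory Num.Theory.
Local Open Scope ring_scope.

(* Basis vectors e_0,e_1,e_2,e_3 are indexed by 'I_4 (e_0 is index 0, with
   e_0^2 = 0).  A basis blade e_J (J a subset of {0,1,2,3}) is the geometric
   product of the e_j, j in J, in increasing order. *)
Notation mv R := {ffun {set 'I_4} -> R}.

(* reordering sign: e_J e_K = sgnJK J K e_{J u K} when J, K disjoint *)
Definition sgnJK (R : rcfType) (J K : {set 'I_4}) : R :=
  (-1) ^+ #|[set x in setX J K | (x.2 < x.1)%N]|.

Definition mvscale (R : rcfType) (a : R) (A : mv R) : mv R := [ffun L => a * A L].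

Definition blade (R : rcfType) (J : {set 'I_4}) : mv R := [ffun L => (L == J)%:R].

Definition wedge (R : rcfType) (A B : mv R) : mv R :=
  [ffun L => \sum_(J : {set 'I_4}) \sum_(K : {set 'I_4} |
       [disjoint J & K] && (J :|: K == L)) sgnJK R J K * A J * B K].

(* Hodge dual: e_J^* = sgnJK J (~: J) e_{~: J}; this is the unique multiple c
   of the complementary blade with e_J (c e_{~:J}) = e_0123, since the
   geometric product of disjoint blades is their wedge and sgn^2 = 1. *)
Definition hodge (R : rcfType) (A : mv R) : mv R :=
  [ffun L => sgnJK R (~: L) L * A (~: L)].

Definition unhodge (R : rcfType) (A : mv R) : mv R :=
  [ffun L => sgnJK R L (~: L) * A (~: L)].

Definition join (R : rcfType) (A B : mv R) : mv R :=
  unhodge (wedge (hodge A) (hodge B)).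

Fixpoint joins (R : rcfType) (s : seq (mv R)) : mv R :=
  match s with
  | [::] => blade R setT
  | [:: a] => a
  | a :: s' => join a (joins s')
  end.

Definition e1 : 'I_4 := @inord 3 1.
Definition e2 : 'I_4 := @inord 3 2.
Definition e3 : 'I_4 := @inord 3 3.

(* normalized point at position p = x e1 + y e2 + z e3 : (e_0 + p)^* *)
Definition point (R : rcfType) (p : 'rV[R]_3) : mv R :=
  hodge (blade R [set ord0] + mvscale (p 0 0) (blade R [set e1])
         + mvscale (p 0 1) (blade R [set e2]) + mvscale (p 0 2) (blade R [set e3])).

(* A = A_E + e_0 A_I: coefficients of A_E are those on blades without e_0,
   coefficients of A_I are those on blades containing e_0 (e_J = e_0 e_{J\0}). *)
Definition enorm (R : rcfType) (A : mv R) : R :=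
  Num.sqrt (\sum_(J : {set 'I_4} | ord0 \notin J) A J ^+ 2).
Definition inorm (R : rcfType) (A : mv R) : R :=
  Num.sqrt (\sum_(J : {set 'I_4} | ord0 \in J) A J ^+ 2).

Definition carrier (R : rcfType) (s : seq 'rV[R]_3) : mv R := joins (map (@point R) s).

Definition face (R : rcfType) (k : nat) (v : 'I_k.+1 -> 'rV[R]_3) (i : 'I_k.+1)
  : seq 'rV[R]_3 := [seq v j | j <- enum 'I_k.+1 & j != i].

Definition boundary_carrier_sum (R : rcfType) (k : nat) (v : 'I_k.+1 -> 'rV[R]_3)
  : mv R := \sum_(i < k.+1) mvscale ((-1) ^+ i) (carrier (face v i)).

(* Main.v *)
Require Import Defs.
From HB Require Import structures.
From mathcomp Require Import all_boot all_order all_algebra.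
From mathcomp Require Import ring.
Set Implicit Arguments. Unset Strict Implicit. Unset Printing Implicit Defensive.
Import Order.TTheory GRing.Theory Num.Theory.
Local Open Scope ring_scope.

Definition bit (a i : nat) : bool := odd (a %/ 2 ^ i).
Definition S (n : nat) : {set 'I_4} := [set i : 'I_4 | bit n i].
Definition Pn (a b n : nat) : bool :=
  all (fun i => ~~ (bit a i && bit b i) && ((bit a i || bit b i) == bit n i)) (iota 0 4).
Definition Sn (a b : nat) : bool :=
  odd (sumn [seq (bit a x.1 && bit b x.2 && (x.2 < x.1)%N : nat)
     | x <- [seq (i, j) | i <- iota 0 4, j <- iota 0 4]]).
Definition wtabN (n : nat) : seq (nat * nat * bool) :=
  [seq (x.1, x.2, Sn x.1 x.2) |
     x <- [seq x <- [seq (x, y) | x <- iota 0 16, y <- iota 0 16] | Pn x.1 x.2 n]].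
Definition cardo (J K : {set 'I_4}) : bool := odd #|[set x in setX J K | (x.2 < x.1)%N]|.
Definition wtab (n : nat) : seq (nat * nat * bool) :=
  match n with
  | 0 => [:: (0, 0, false)]
  | 1 => [:: (0, 1, false); (1, 0, false)]
  | 2 => [:: (0, 2, false); (2, 0, false)]
  | 3 => [:: (0, 3, false); (1, 2, false); (2, 1, true); (3, 0, false)]
  | 4 => [:: (0, 4, false); (4, 0, false)]
  | 5 => [:: (0, 5, false); (1, 4, false); (4, 1, true); (5, 0, false)]
  | 6 => [:: (0, 6, false); (2, 4, false); (4, 2, true); (6, 0, false)]
  | 7 => [:: (0, 7, false); (1, 6, false); (2, 5, true); (3, 4, false); (4, 3, false); (5, 2, true); (6, 1, false); (7, 0, false)]
  | 8 => [:: (0, 8, false); (8, 0, false)]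
  | 9 => [:: (0, 9, false); (1, 8, false); (8, 1, true); (9, 0, false)]
  | 10 => [:: (0, 10, false); (2, 8, false); (8, 2, true); (10, 0, false)]
  | 11 => [:: (0, 11, false); (1, 10, false); (2, 9, true); (3, 8, false); (8, 3, false); (9, 2, true); (10, 1, false); (11, 0, false)]
  | 12 => [:: (0, 12, false); (4, 8, false); (8, 4, true); (12, 0, false)]
  | 13 => [:: (0, 13, false); (1, 12, false); (4, 9, true); (5, 8, false); (8, 5, false); (9, 4, true); (12, 1, false); (13, 0, false)]
  | 14 => [:: (0, 14, false); (2, 12, false); (4, 10, true); (6, 8, false); (8, 6, false); (10, 4, true); (12, 2, false); (14, 0, false)]
  | 15 => [:: (0, 15, false); (1, 14, false); (2, 13, true); (3, 12, false); (4, 11, false); (5, 10, true); (6, 9, false); (7, 8, false); (8, 7, true); (9, 6, false); (10, 5, true); (11, 4, true); (12, 3, false); (13, 2, false); (14, 1, true); (15, 0, false)]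
  | _ => [::] end.
Definition hsg (n : nat) : bool :=
  match n with
  | 0 => false
  | 1 => true
  | 2 => false
  | 3 => false
  | 4 => true
  | 5 => true
  | 6 => false
  | 7 => true
  | 8 => false
  | 9 => false
  | 10 => true
  | 11 => false
  | 12 => false
  | 13 => true
  | 14 => false
  | 15 => false
  | _ => false end.
Definition usg (n : nat) : bool :=
  match n with
  | 0 => false
  | 1 => false
  | 2 => true
  | 3 => false
  | 4 => false
  | 5 => true
  | 6 => false
  | 7 => false
  | 8 => true
  | 9 => false
  | 10 => true
  | 11 => true
  | 12 => false
  | 13 => false
  | 14 => true
  | 15 => false
  | _ => false end.
Definition cmp (n : nat) : nat :=
  match n with
  | 0 => 15
  | 1 => 14
  | 2 => 13
  | 3 => 12
  | 4 => 11
  | 5 => 10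
  | 6 => 9
  | 7 => 8
  | 8 => 7
  | 9 => 6
  | 10 => 5
  | 11 => 4
  | 12 => 3
  | 13 => 2
  | 14 => 1
  | 15 => 0
  | _ => 0 end.
Lemma chk_w : all (fun n => wtab n == wtabN n) (iota 0 16). Proof. by vm_compute. Qed.
Lemma chk_w2 : all (fun n => all (fun x => (x.1.1 < 16) && (x.1.2 < 16))%N (wtab n)) (iota 0 16).
Proof. by vm_compute. Qed.
Lemma chk_c : all (fun n => (cmp n < 16)%N && all (fun i => bit (cmp n) i == ~~ bit n i) (iota 0 4)
   && (Sn (cmp n) n == hsg n) && (Sn n (cmp n) == usg n)) (iota 0 16).
Proof. by vm_compute. Qed.
Lemma chk_b : all (fun a => a == sumn [seq bit a i * 2 ^ i | i <- iota 0 4])%N (iota 0 16).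
Proof. by vm_compute. Qed.

Lemma allI (P : nat -> bool) m n : all P (iota 0 m) -> (n < m)%N -> P n.
Proof. by move/allP => H Hn; apply: H; rewrite mem_iota. Qed.

Lemma forall4 (P : nat -> bool) : [forall i : 'I_4, P i] = all P (iota 0 4).
Proof.
apply/forallP/allP => [H x|H i]; last by apply: H; rewrite mem_iota /=.
by rewrite mem_iota /= => Hx; exact: (H (Ordinal Hx)).
Qed.

Lemma eqsetE (X Y : {set 'I_4}) : (X == Y) = [forall i, (i \in X) == (i \in Y)].
Proof. by apply/eqP/forallP => [-> //|H]; apply/setP => i; apply/eqP/H. Qed.

Lemma L1 a b n : [disjoint S a & S b] && (S a :|: S b == S n) = Pn a b n.
Proof.
rewrite -setI_eq0 !eqsetE /Pn -forall4.
apply/andP/forallP => [[/forallP H1 /forallP H2] i | H]; last first.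
  split; apply/forallP => i; move: (H i); rewrite !inE;
  by case: (bit a i) (bit b i) (bit n i) => [] [] [].
move: (H1 i) (H2 i); rewrite !inE.
by case: (bit a i) (bit b i) (bit n i) => [] [] [].
Qed.

Lemma L2 a b : cardo (S a) (S b) = Sn a b.
Proof.
rewrite /cardo /Sn; congr odd.
rewrite -sum1_card big_mkcond /=.
rewrite (eq_bigr (fun x : 'I_4 * 'I_4 => ((bit a x.1 && bit b x.2 && (x.2 < x.1)%N) : nat))); last first.
  by move=> x _; rewrite !inE; case: ifP.
rewrite -(pair_bigA _ (fun i j : 'I_4 => ((bit a i && bit b j && (j < i)%N) : nat))) /=.
rewrite !big_ord_recl big_ord0 /=.
rewrite !big_ord0 /bump /=.
ring.
Qed.

Lemma S_inj a b : (a < 16)%N -> (b < 16)%N -> S a = S b -> a = b.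
Proof.
move=> Ha Hb E.
rewrite (eqP (allI chk_b Ha)) (eqP (allI chk_b Hb)).
congr sumn; apply/eq_in_map => i; rewrite mem_iota /= => Hi.
by move/setP: E => /(_ (Ordinal Hi)); rewrite !inE => ->.
Qed.

Lemma sum_sets (R : rcfType) (F : {set 'I_4} -> R) : \sum_J F J = \sum_(a < 16) F (S a).
Proof.
have inj : injective (fun a : 'I_16 => S a).
  by move=> x y /S_inj => /(_ (ltn_ord x) (ltn_ord y)) /val_inj.
have bij : bijective (fun a : 'I_16 => S a).
  apply: inj_card_bij => //.
  by rewrite -cardsT -powersetT card_powerset cardsT !card_ord.
by rewrite (reindex (fun a : 'I_16 => S a)) //; apply: onW_bij.
Qed.

Definition sgr (R : rcfType) (b : bool) : R := if b then -1 else 1.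

Lemma sgnE (R : rcfType) (J K : {set 'I_4}) : sgnJK R J K = sgr R (cardo J K).
Proof. by rewrite /sgnJK /cardo -signr_odd; case: odd; rewrite /= ?expr1 ?expr0. Qed.

Lemma setC_S n : (n < 16)%N -> ~: S n = S (cmp n).
Proof.
move=> Hn; have := allI chk_c Hn => /andP [/andP [/andP [_ H] _] _].
apply/setP => i; rewrite !inE.
by move: (allI H (ltn_ord i)) => /eqP ->.
Qed.

Lemma cmp_lt n : (n < 16)%N -> (cmp n < 16)%N.
Proof. by move=> Hn; have := allI chk_c Hn => /andP [/andP [/andP [-> _] _] _]. Qed.

Lemma hsgE n : (n < 16)%N -> Sn (cmp n) n = hsg n.
Proof. by move=> Hn; have := allI chk_c Hn => /andP [/andP [_ /eqP ->] _]. Qed.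
Lemma usgE n : (n < 16)%N -> Sn n (cmp n) = usg n.
Proof. by move=> Hn; have := allI chk_c Hn => /andP [_ /eqP ->]. Qed.

Definition vw (R : rcfType) (A : mv R) : nat -> R := fun n => A (S n).

Lemma vw_hodge (R : rcfType) (A : mv R) n : (n < 16)%N ->
  vw (hodge A) n = sgr R (hsg n) * vw A (cmp n).
Proof. by move=> Hn; rewrite /vw ffunE setC_S // sgnE L2 hsgE. Qed.

Lemma vw_unhodge (R : rcfType) (A : mv R) n : (n < 16)%N ->
  vw (unhodge A) n = sgr R (usg n) * vw A (cmp n).
Proof. by move=> Hn; rewrite /vw ffunE setC_S // sgnE L2 usgE. Qed.

Lemma foldr_sum (R : rcfType) (T : Type) (F : T -> R) s :
  foldr (fun x acc => F x + acc) 0 s = \sum_(x <- s) F x.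
Proof. by elim: s => [|x s IH]; rewrite ?big_nil ?big_cons //= IH. Qed.

Definition mwedge (R : rcfType) (f g : nat -> R) (n : nat) : R :=
  foldr (fun x acc => sgr R x.2 * f x.1.1 * g x.1.2 + acc) 0 (wtab n).

Lemma vw_wedge (R : rcfType) (A B : mv R) n : (n < 16)%N ->
  vw (wedge A B) n = mwedge (vw A) (vw B) n.
Proof.
move=> Hn; rewrite /vw /mwedge ffunE sum_sets foldr_sum (eqP (allI chk_w Hn)).
rewrite /wtabN big_map big_filter [in X in _ = X]big_mkcond big_allpairs_dep.
rewrite -[iota 0 16]/(index_iota 0 16) big_mkord.
apply: eq_bigr => a _.
rewrite [in X in X = _]big_mkcond sum_sets big_mkord.
apply: eq_bigr => b _.
by rewrite L1 sgnE L2.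
Qed.

Lemma mwedge_ext (R : rcfType) (f f' g g' : nat -> R) n : (n < 16)%N ->
  (forall m, (m < 16)%N -> f m = f' m) -> (forall m, (m < 16)%N -> g m = g' m) ->
  mwedge f g n = mwedge f' g' n.
Proof.
move=> Hn Hf Hg; rewrite /mwedge !foldr_sum; apply: eq_big_seq => x Hx.
have /andP [H1 H2] := allP (allI chk_w2 Hn) x Hx.
by rewrite Hf // Hg.
Qed.

Definition mhodge (R : rcfType) (f : nat -> R) (n : nat) : R := sgr R (hsg n) * f (cmp n).
Definition munhodge (R : rcfType) (f : nat -> R) (n : nat) : R := sgr R (usg n) * f (cmp n).
Definition mjoin (R : rcfType) (f g : nat -> R) : nat -> R :=
  munhodge (mwedge (mhodge f) (mhodge g)).

Lemma vw_join (R : rcfType) (A B : mv R) f g :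
  (forall m, (m < 16)%N -> vw A m = f m) -> (forall m, (m < 16)%N -> vw B m = g m) ->
  forall n, (n < 16)%N -> vw (join A B) n = mjoin f g n.
Proof.
move=> HA HB n Hn; rewrite /join vw_unhodge // /mjoin /munhodge vw_wedge ?cmp_lt //.
congr (_ * _); apply: mwedge_ext; rewrite ?cmp_lt // => m Hm;
by rewrite vw_hodge // /mhodge ?HA ?HB ?cmp_lt.
Qed.

Definition mbase (R : rcfType) (p : 'rV[R]_3) (n : nat) : R :=
  match n with 1 => 1 | 2 => p 0 0 | 4 => p 0 1 | 8 => p 0 2 | _ => 0 end.
Definition mpoint (R : rcfType) (p : 'rV[R]_3) : nat -> R := mhodge (mbase p).

Lemma eqS n m : (n < 16)%N -> (m < 16)%N -> (S n == S m) = (n == m).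
Proof. by move=> Hn Hm; apply/eqP/eqP => [/S_inj|->]; auto. Qed.

Lemma set1S0 : [set ord0] = S 1.
Proof. by apply/setP => i; rewrite !inE; case: i => [[|[|[|[|//]]]]]. Qed.
Lemma set1S1 : [set e1] = S 2.
Proof. by apply/setP => i; rewrite !inE -val_eqE /e1 /= inordK //; case: i => [[|[|[|[|//]]]]]. Qed.
Lemma set1S2 : [set e2] = S 4.
Proof. by apply/setP => i; rewrite !inE -val_eqE /e2 /= inordK //; case: i => [[|[|[|[|//]]]]]. Qed.
Lemma set1S3 : [set e3] = S 8.
Proof. by apply/setP => i; rewrite !inE -val_eqE /e3 /= inordK //; case: i => [[|[|[|[|//]]]]]. Qed.

Lemma vw_point (R : rcfType) (p : 'rV[R]_3) n : (n < 16)%N -> vw (point p) n = mpoint p n.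
Proof.
move=> Hn; rewrite /point vw_hodge // /mpoint /mhodge; congr (_ * _).
have := cmp_lt Hn; move: (cmp n) => m Hm.
rewrite /vw !ffunE set1S0 set1S1 set1S2 set1S3 !eqS //.
by do 16? [case: m Hm => [|m] Hm; first by rewrite /=; ring].
Qed.

Fixpoint mjoins (R : rcfType) (s : seq (nat -> R)) : nat -> R :=
  match s with
  | [::] => fun n => (n == 15)%:R
  | [:: a] => a
  | a :: s' => mjoin a (mjoins s')
  end.

Lemma setTS : [set: 'I_4] = S 15.
Proof. by apply/setP => i; rewrite !inE; case: i => [[|[|[|[|//]]]]]. Qed.

Lemma vw_joins (R : rcfType) (s : seq 'rV[R]_3) n : (n < 16)%N ->
  vw (joins (map (@point R) s)) n = mjoins (map (@mpoint R) s) n.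
Proof.
case: s => [|p s] Hn; first by rewrite /vw /= ffunE setTS eqS.
elim: s p n Hn => [|q s IH] p n Hn; first by rewrite /= vw_point.
by rewrite [map _ _]/= [joins _]/= [mjoins _]/=; apply: vw_join => // m Hm;
  [exact: vw_point | exact: IH].
Qed.

Lemma sum_sets_cond (R : rcfType) (P : pred {set 'I_4}) (F : {set 'I_4} -> R) :
  \sum_(J | P J) F J = \sum_(a < 16 | P (S a)) F (S a).
Proof. by rewrite big_mkcond sum_sets [in X in _ = X]big_mkcond. Qed.

Lemma ord0S a : (ord0 \in S a) = odd a.
Proof. by rewrite inE /bit expn0 divn1. Qed.

Lemma enormE (R : rcfType) (A : mv R) :
  enorm A = Num.sqrt (\sum_(a <- [seq a <- iota 0 16 | ~~ odd a]) vw A a ^+ 2).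
Proof.
rewrite /enorm sum_sets_cond big_filter.
rewrite -[iota 0 16]/(index_iota 0 16) big_mkord.
by under eq_bigl => a do rewrite ord0S.
Qed.

Lemma inormE (R : rcfType) (A : mv R) :
  inorm A = Num.sqrt (\sum_(a <- [seq a <- iota 0 16 | odd a]) vw A a ^+ 2).
Proof.
rewrite /inorm sum_sets_cond big_filter.
rewrite -[iota 0 16]/(index_iota 0 16) big_mkord.
by under eq_bigl => a do rewrite ord0S.
Qed.

Lemma enum_iota (T : Type) k (F : 'I_k.+1 -> T) :
  [seq F i | i <- enum 'I_k.+1] = [seq F (inord n) | n <- iota 0 k.+1].
Proof.
rewrite -val_enum_ord -map_comp; apply: eq_map => i /=; by rewrite inord_val.
Qed.

Lemma face_iota (T : Type) k (F : 'I_k.+1 -> T) (i : 'I_k.+1) :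
  [seq F j | j <- enum 'I_k.+1 & j != i] = [seq F (inord n) | n <- iota 0 k.+1 & n != nat_of_ord i].
Proof.
rewrite -val_enum_ord [in X in _ = X]filter_map -map_comp.
rewrite (@eq_filter _ _ (fun j => j != i)) //.
by apply: eq_map => j /=; rewrite inord_val.
Qed.

Lemma sgr_odd (R : rcfType) m : (-1) ^+ m = sgr R (odd m).
Proof. by rewrite -signr_odd; case: odd; rewrite /= ?expr1 ?expr0. Qed.

Lemma lt16 (P : pred nat) a : a \in [seq x <- iota 0 16 | P x] -> (a < 16)%N.
Proof. by rewrite mem_filter mem_iota => /andP []. Qed.

Lemma reduce (R : rcfType) (k : nat) (v : 'I_k.+1 -> 'rV[R]_3) :
  let w := fun n => v (inord n) in
  enorm (joins [seq point (v i) | i <- enum 'I_k.+1]) =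
  Num.sqrt (\sum_(a <- [seq a <- iota 0 16 | ~~ odd a]) mjoins (map (@mpoint R) (map w (iota 0 k.+1))) a ^+ 2)
  /\ inorm (boundary_carrier_sum v) =
  Num.sqrt (\sum_(a <- [seq a <- iota 0 16 | odd a])
    (\sum_(m <- iota 0 k.+1) sgr R (odd m) * mjoins (map (@mpoint R) (map w [seq n <- iota 0 k.+1 | n != m])) a) ^+ 2).
Proof.
move=> w; split.
  rewrite enormE; congr Num.sqrt; apply: eq_big_seq => a Ha.
  by rewrite enum_iota (map_comp (@point R) w) vw_joins ?(lt16 Ha) // -map_comp.
rewrite inormE; congr Num.sqrt; apply: eq_big_seq => a Ha; congr (_ ^+ 2).
rewrite /boundary_carrier_sum /vw sum_ffunE.
rewrite -[iota 0 k.+1]/(index_iota 0 k.+1) big_mkord.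
apply: eq_bigr => i _; rewrite ffunE /carrier /face face_iota sgr_odd; congr (_ * _).
by rewrite -[joins _ _]/(vw (joins _) a) vw_joins ?(lt16 Ha).
Qed.

Lemma case1 (R : rcfType) (w : nat -> 'rV[R]_3) :
  (\sum_(a <- [seq a <- iota 0 16 | ~~ odd a]) mjoins (map (@mpoint R) (map w (iota 0 2))) a ^+ 2) =
  (\sum_(a <- [seq a <- iota 0 16 | odd a])
    (\sum_(m <- iota 0 2) sgr R (odd m) * mjoins (map (@mpoint R) (map w [seq n <- iota 0 2 | n != m])) a) ^+ 2).
Proof.
rewrite -!foldr_sum /=.
rewrite !big_cons !big_nil /=.
(unfold mpoint, mjoin, munhodge, mwedge, mhodge, mbase, sgr; simpl).
ring.
Qed.

Lemma case2 (R : rcfType) (w : nat -> 'rV[R]_3) :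
  (\sum_(a <- [seq a <- iota 0 16 | ~~ odd a]) mjoins (map (@mpoint R) (map w (iota 0 3))) a ^+ 2) =
  (\sum_(a <- [seq a <- iota 0 16 | odd a])
    (\sum_(m <- iota 0 3) sgr R (odd m) * mjoins (map (@mpoint R) (map w [seq n <- iota 0 3 | n != m])) a) ^+ 2).
Proof.
rewrite -!foldr_sum /=.
rewrite !big_cons !big_nil /=.
(unfold mpoint, mjoin, munhodge, mwedge, mhodge, mbase, sgr; simpl).
ring.
Qed.

Lemma case3 (R : rcfType) (w : nat -> 'rV[R]_3) :
  (\sum_(a <- [seq a <- iota 0 16 | ~~ odd a]) mjoins (map (@mpoint R) (map w (iota 0 4))) a ^+ 2) =
  (\sum_(a <- [seq a <- iota 0 16 | odd a])
    (\sum_(m <- iota 0 4) sgr R (odd m) * mjoins (map (@mpoint R) (map w [seq n <- iota 0 4 | n != m])) a) ^+ 2).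
Proof.
rewrite -!foldr_sum /=.
rewrite !big_cons !big_nil /=.
(unfold mpoint, mjoin, munhodge, mwedge, mhodge, mbase, sgr; simpl).
ring.
Qed.

Unset Implicit Arguments.
Theorem theorem1 (R : rcfType) (k : nat) (v : 'I_k.+1 -> 'rV[R]_3) :
  (1 <= k <= 3)%N ->
  (k`!%:R)^-1 * enorm (joins [seq point (v i) | i <- enum 'I_k.+1])
    = (k`!%:R)^-1 * inorm (boundary_carrier_sum v)
  /\
  (k`!%:R)^-1 * inorm (boundary_carrier_sum v)
    = (k`!%:R)^-1 * inorm (\sum_(i < k.+1) mvscale ((-1) ^+ i)
          (joins [seq point (v j) | j <- enum 'I_k.+1 & j != i])).
Proof.
move=> Hk; split; last first.
  congr (_ * inorm _); apply: eq_bigr => i _.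
  by rewrite /carrier /face -map_comp.
congr (_ * _).
have [-> ->] := reduce v; congr Num.sqrt.
move: (fun n => v (inord n)) => w.
case: k v Hk w => [|[|[|[|k]]]] // v _ w.
- exact: case1.
- exact: case2.
- exact: case3.
Qed.
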